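(* The monoid $\mathcal{BR}(\mathcal{B}r_n)$ is generated by $d_1,\ldots,d_{n-1}$, $e_1,\ldots,e_{n-1}$ and $z_1,\ldots,z_{n-1}$.
   Context: $\mathfrak{C}_n$ is the partition monoid: set partitions of $[2n]$ (top points $1..n$, bottom $n+1..2n$) with concatenation product $*$ (identify bottom point $n+i$ of the first with top point $i$ of the second, join blocks transitively, delete middle points). $I\preceq J$ means each block of $J$ is a union of blocks of $I$. The Brauer monoid $\mathcal{B}r_n$ is the submonoid of set partitions all of whose blocks have exactly two elements; it contains $\mathfrak{S}_n$ (blocks $\{i,n+j\}$), with simple transpositions $s_i$, identity $1=\{\{i,n+i\}\}$, and $t_i$ = the partition with blocks $\{i,i+1\}$, $\{n+i,n+i+1\}$ and $\{j,n+j\}$ for $j\ne i,i+1$. A set partition $J$ of $[2n]$ is boxed if $1\preceq J$ and $J$ restricted to $[n]$ has interval blocks. $\mathcal{BR}(\mathcal{B}r_n)$ is the monoid of pairs $(I,J)$ with $I\in\mathcal{B}r_n$, $J$ boxed, $I\preceq J$, with product $(I,J)(H,K)=(I*H,J*K)$. $b_i$ merges the blocks $\{i,n+i\}$ and $\{i+1,n+i+1\}$ of $1$; $e_i=(1,b_i)$, $z_i=(s_i,b_i)$, $d_i=(t_i,b_i)$. *)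

(* Defs.v *)
From mathcomp Require Import all_boot.
Set Implicit Arguments. Unset Strict Implicit. Unset Printing Implicit Defensive.

(* A set partition of [2n] is a P : {set {set 'I_(n+n)}} with
   partition P setT.  Top point i (paper: i+1) is lshift n i,
   bottom point i (paper: n+i+1) is rshift n i; indices are 0-based. *)
Definition spart (n : nat) := {set {set 'I_(n + n)}}.

Definition top n (i : 'I_n) : 'I_(n + n) := lshift n i.
Definition bot n (i : 'I_n) : 'I_(n + n) := rshift n i.

(* successor of i in 'I_n (used only when i.+1 < n) *)
Definition succI n (i : 'I_n) : 'I_n := insubd i i.+1.

Definition is_spart n (P : spart n) := partition P [set: 'I_(n + n)].

Definition sameb n (P : spart n) (x y : 'I_(n + n)) : bool :=
  [exists B in P, (x \in B) && (y \in B)].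

(* Concatenation: three layers (0 = top, 1 = middle, 2 = bottom). *)
Definition layer0 : 'I_3 := inord 0.
Definition layer1 : 'I_3 := inord 1.
Definition layer2 : 'I_3 := inord 2.

Definition emb n (l1 l2 : 'I_3) (p : 'I_(n + n)) : 'I_3 * 'I_n :=
  match split p with inl i => (l1, i) | inr i => (l2, i) end.

Definition glue_edge n (I J : spart n) : rel ('I_3 * 'I_n) :=
  fun u v =>
    [exists x, exists y, [&& emb layer0 layer1 x == u, emb layer0 layer1 y == v & sameb I x y]]
 || [exists x, exists y, [&& emb layer1 layer2 x == u, emb layer1 layer2 y == v & sameb J x y]].

(* I * J : outer points are joined iff connected in the glued graph;
   blocks consisting only of middle points are discarded. *)
Definition pmul n (I J : spart n) : spart n :=
  equivalence_partition
    (fun x y => connect (glue_edge I J) (emb layer0 layer2 x) (emb layer0 layer2 y))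
    [set: 'I_(n + n)].

Definition pleq n (I J : spart n) : Prop :=
  forall B, B \in J -> exists S : {set {set 'I_(n + n)}}, S \subset I /\ B = cover S.

Definition brauer n (P : spart n) : Prop :=
  is_spart P /\ forall B, B \in P -> #|B| = 2.

Definition idp n : spart n := [set [set top i; bot i] | i : 'I_n].

Definition boxed n (J : spart n) : Prop :=
  is_spart J /\ pleq (idp n) J /\
  forall B, B \in J -> forall x y z : 'I_n,
    x <= y -> y <= z -> top x \in B -> top z \in B -> top y \in B.

Definition inBR n (I J : spart n) : Prop := brauer I /\ boxed J /\ pleq I J.

Definition brmul n (a b : spart n * spart n) : spart n * spart n :=
  (pmul a.1 b.1, pmul a.2 b.2).

(* s_i, t_i, b_i (for i with i.+1 < n; paper index i+1) *)
Definition s_gen n (i : 'I_n) : spart n :=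
  [set [set top i; bot (succI i)]; [set top (succI i); bot i]] :|:
  [set [set top j; bot j] | j in [set j : 'I_n | (j != i) && (j != succI i)]].

Definition t_gen n (i : 'I_n) : spart n :=
  [set [set top i; top (succI i)]; [set bot i; bot (succI i)]] :|:
  [set [set top j; bot j] | j in [set j : 'I_n | (j != i) && (j != succI i)]].

Definition b_gen n (i : 'I_n) : spart n :=
  [set [set top i; bot i; top (succI i); bot (succI i)]] :|:
  [set [set top j; bot j] | j in [set j : 'I_n | (j != i) && (j != succI i)]].

Inductive gkind := Gd | Ge | Gz.

Definition gen n (g : gkind * 'I_n) : spart n * spart n :=
  match g.1 with
  | Gd => (t_gen g.2, b_gen g.2)
  | Ge => (idp n, b_gen g.2)
  | Gz => (s_gen g.2, b_gen g.2)
  end.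

Definition evalw n (w : seq (gkind * 'I_n)) : spart n * spart n :=
  foldr (fun g acc => brmul (gen g) acc) (idp n, idp n) w.

(* Main.v *)
Require Import Defs.
From mathcomp Require Import all_boot.
From mathcomp Require Import zify.
Set Implicit Arguments. Unset Strict Implicit. Unset Printing Implicit Defensive.

Section Basics.
Variable n : nat.
Implicit Types (x y z : 'I_(n + n)) (i j k : 'I_n) (P Q X : spart n).

Definition proj x : 'I_n := match split x with inl i => i | inr i => i end.
Definition istop x : bool := if split x is inl _ then true else false.

Lemma proj_top i : proj (top i) = i.
Proof. by rewrite /proj /top -/(unsplit (inl _)) unsplitK. Qed.
Lemma proj_bot i : proj (bot i) = i.
Proof. by rewrite /proj /bot -/(unsplit (inr _)) unsplitK. Qed.
Lemma istop_top i : istop (top i).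
Proof. by rewrite /istop /top -/(unsplit (inl _)) unsplitK. Qed.
Lemma istop_bot i : istop (bot i) = false.
Proof. by rewrite /istop /bot -/(unsplit (inr _)) unsplitK. Qed.

Variant tb_spec x : bool -> 'I_n -> Type :=
 | TBtop i of x = top i : tb_spec x true i
 | TBbot i of x = bot i : tb_spec x false i.

Lemma tbP x : tb_spec x (istop x) (proj x).
Proof.
rewrite /istop /proj; rewrite -{1}(splitK x); case: (split x) => i /=.
  by apply: TBtop. by apply: TBbot.
Qed.

Lemma top_inj : injective (@top n).
Proof. by move=> i j /(congr1 proj); rewrite !proj_top. Qed.
Lemma bot_inj : injective (@bot n).
Proof. by move=> i j /(congr1 proj); rewrite !proj_bot. Qed.
Lemma top_bot i j : (top i == bot j) = false.
Proof. by apply/negbTE/negP => /eqP /(congr1 istop); rewrite istop_top istop_bot. Qed.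
Lemma bot_top i j : (bot i == top j) = false.
Proof. by rewrite eq_sym top_bot. Qed.
Lemma eq_top i j : (top i == top j) = (i == j).
Proof. by apply/eqP/eqP => [/top_inj|->]. Qed.
Lemma eq_bot i j : (bot i == bot j) = (i == j).
Proof. by apply/eqP/eqP => [/bot_inj|->]. Qed.

Lemma sameb_sym P x y : sameb P x y = sameb P y x.
Proof.
by apply/existsP/existsP => -[B /andP[BP /andP[h1 h2]]]; exists B; rewrite BP h1 h2.
Qed.

Lemma sameb_pblock P x y : is_spart P -> sameb P x y = (pblock P x == pblock P y).
Proof.
case/and3P => /eqP cov tI _.
have xc : x \in cover P by rewrite cov inE.
rewrite eq_pblock //; apply/existsP/idP => [[B /andP[BP /andP[xB yB]]]|yx].
  by rewrite (def_pblock tI BP xB).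
by exists (pblock P x); rewrite pblock_mem // mem_pblock xc yx.
Qed.

Lemma sameb_refl P x : is_spart P -> sameb P x x.
Proof. by move=> h; rewrite sameb_pblock. Qed.

Lemma sameb_trans P x y z : is_spart P -> sameb P x y -> sameb P y z -> sameb P x z.
Proof. by move=> h; rewrite !sameb_pblock // => /eqP-> . Qed.

Definition kpart (K : eqType) (k : 'I_(n+n) -> K) : spart n :=
  equivalence_partition (fun x y => k x == k y) [set: 'I_(n+n)].

Lemma kpart_spart (K : eqType) (k : 'I_(n+n) -> K) : is_spart (kpart k).
Proof. by apply: equivalence_partitionP => x y z _ _ _; split => // /eqP->. Qed.

Lemma kpart_sameb (K : eqType) (k : 'I_(n+n) -> K) x y : sameb (kpart k) x y = (k x == k y).
Proof.
rewrite sameb_pblock ?kpart_spart //.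
have [_ tI _] := and3P (kpart_spart k).
rewrite eq_pblock //; last by rewrite (cover_partition (kpart_spart k)) inE.
by rewrite pblock_equivalence_partition ?inE // => a b c _ _ _; split => // /eqP->.
Qed.

Lemma spart_eq P Q : is_spart P -> is_spart Q -> (forall x y, sameb P x y = sameb Q x y) -> P = Q.
Proof.
move=> hP hQ e.
rewrite -(equivalence_partition_pblock hP) -(equivalence_partition_pblock hQ).
rewrite /equivalence_partition; apply: eq_imset => x; apply/setP => y.
have [_ tP _] := and3P hP; have [_ tQ _] := and3P hQ.
rewrite !inE /=. rewrite -!eq_pblock ?(cover_partition hP) ?(cover_partition hQ) ?inE //.
by rewrite -!sameb_pblock.
Qed.

Lemma pmul_spart P Q : is_spart (pmul P Q).
Proof.
apply: equivalence_partitionP => x y z _ _ _; split => [|h]; first exact: connect0.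
have sym : connect_sym (glue_edge P Q).
  apply: sym_connect_sym => u v; rewrite /glue_edge.
  congr orb; apply/existsP/existsP => -[a /existsP[b /and3P[h1 h2 h3]]];
    exists b; apply/existsP; exists a; by rewrite h1 h2 sameb_sym h3.
apply/idP/idP => h2; first by rewrite sym in h; exact: connect_trans h h2.
exact: connect_trans h h2.
Qed.


Lemma eqpart_sameb (R : rel 'I_(n+n)) x y :
  (forall a b c, R c c * (R a b -> R a c = R b c)) ->
  sameb (equivalence_partition R setT) x y = R x y.
Proof.
move=> eR.
have hp : is_spart (equivalence_partition R setT)
  by apply: equivalence_partitionP => a b c _ _ _; exact: eR.
rewrite sameb_pblock //.
have [_ tI _] := and3P hp.
rewrite eq_pblock //; last by rewrite (cover_partition hp) inE.
by rewrite pblock_equivalence_partition ?inE // => a b c _ _ _; exact: eR.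
Qed.

Definition V := ('I_3 * 'I_n)%type.
Definition e01 := emb (n:=n) layer0 layer1.
Definition e12 := emb (n:=n) layer1 layer2.
Definition e02 := emb (n:=n) layer0 layer2.

Lemma embE l1 l2 x : emb l1 l2 x = (if istop x then l1 else l2, proj x).
Proof.
by case: tbP => i ->; rewrite /emb /top /bot -?/(unsplit (inl _)) -?/(unsplit (inr _)) unsplitK.
Qed.

Lemma l01 : (layer0 == layer1) = false. Proof. by apply/eqP => /(congr1 val); rewrite /= !inordK. Qed.
Lemma l02 : (layer0 == layer2) = false. Proof. by apply/eqP => /(congr1 val); rewrite /= !inordK. Qed.
Lemma l12 : (layer1 == layer2) = false. Proof. by apply/eqP => /(congr1 val); rewrite /= !inordK. Qed.
Lemma l10 : (layer1 == layer0) = false. Proof. by apply/eqP => /(congr1 val); rewrite /= !inordK. Qed.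
Lemma l20 : (layer2 == layer0) = false. Proof. by apply/eqP => /(congr1 val); rewrite /= !inordK. Qed.
Lemma l21 : (layer2 == layer1) = false. Proof. by apply/eqP => /(congr1 val); rewrite /= !inordK. Qed.

Lemma layerP (l : 'I_3) : [\/ l = layer0, l = layer1 | l = layer2].
Proof.
case: l => m h.
case: m h => [|[|[|m]]] h.
- by apply: Or31; apply: val_inj; rewrite /= inordK.
- by apply: Or32; apply: val_inj; rewrite /= inordK.
- by apply: Or33; apply: val_inj; rewrite /= inordK.
- by [].
Qed.

Lemma pmul_sameb P Q x y :
  sameb (pmul P Q) x y = connect (glue_edge P Q) (e02 x) (e02 y).
Proof.
rewrite /pmul eqpart_sameb // => a b c; split => [|h]; first exact: connect0.
have sym : connect_sym (glue_edge P Q).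
  apply: sym_connect_sym => u v; rewrite /glue_edge.
  congr orb; apply/existsP/existsP => -[a' /existsP[b' /and3P[h1 h2 h3]]];
    exists b'; apply/existsP; exists a'; by rewrite h1 h2 sameb_sym h3.
apply/idP/idP => h2; first by rewrite sym in h; exact: connect_trans h h2.
exact: connect_trans h h2.
Qed.

Lemma glue_sym P Q : symmetric (glue_edge P Q).
Proof.
move=> u v; rewrite /glue_edge.
congr orb; apply/existsP/existsP => -[a' /existsP[b' /and3P[h1 h2 h3]]];
  exists b'; apply/existsP; exists a'; by rewrite h1 h2 sameb_sym h3.
Qed.

Lemma edge01 P Q x y : sameb P x y -> glue_edge P Q (e01 x) (e01 y).
Proof. by move=> h; apply/orP; left; apply/existsP; exists x; apply/existsP; exists y; rewrite !eqxx h. Qed.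
Lemma edge12 P Q x y : sameb Q x y -> glue_edge P Q (e12 x) (e12 y).
Proof. by move=> h; apply/orP; right; apply/existsP; exists x; apply/existsP; exists y; rewrite !eqxx h. Qed.

Lemma edgeP P Q u v : glue_edge P Q u v ->
  (exists x y, [/\ u = e01 x, v = e01 y & sameb P x y]) \/
  (exists x y, [/\ u = e12 x, v = e12 y & sameb Q x y]).
Proof.
case/orP => /existsP[x /existsP[y /and3P[/eqP h1 /eqP h2 h3]]].
  by left; exists x, y.
by right; exists x, y.
Qed.

Lemma sameb_ex P x y : sameb P x y -> exists2 B, B \in P & (x \in B) && (y \in B).
Proof. by case/existsP => B /andP[h1 h2]; exists B. Qed.

Lemma sameb_in P B x y : B \in P -> x \in B -> y \in B -> sameb P x y.
Proof. by move=> h1 h2 h3; apply/existsP; exists B; rewrite h1 h2 h3. Qed.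

End Basics.

Lemma connect_fiber (T : finType) (K : eqType) (e : rel T) (g : T -> K) :
  symmetric e -> (forall u v, e u v -> g u = g v) ->
  (forall u v, g u = g v -> connect e u v) ->
  forall u v, connect e u v = (g u == g v).
Proof.
move=> sy h1 h2 u v; apply/idP/idP => [/connectP[s pth ->]|/eqP/h2 //].
elim: s u pth => [|w s IH] u /=; first by [].
by case/andP => /h1 -> /IH.
Qed.


Section Prod.
Variable n : nat.
Implicit Types (x y z : 'I_(n + n)) (i j k : 'I_n) (P Q X G : spart n).

Definition un12 (w : V n) : 'I_(n+n) := if w.1 == layer1 then top w.2 else bot w.2.

Lemma e12K (w : V n) : w.1 != layer0 -> e12 (un12 w) = w.
Proof.
case: w => l j /=; rewrite /un12 /=; case: (layerP l) => ->; rewrite ?eqxx //.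
  by move=> _; rewrite /e12 embE istop_top proj_top.
by move=> _; rewrite l21 /e12 embE istop_bot proj_bot.
Qed.

Lemma e01_top j : e01 (top j) = (layer0, j).
Proof. by rewrite /e01 embE istop_top proj_top. Qed.
Lemma e01_bot j : e01 (bot j) = (layer1, j).
Proof. by rewrite /e01 embE istop_bot proj_bot. Qed.
Lemma e12_top j : e12 (top j) = (layer1, j).
Proof. by rewrite /e12 embE istop_top proj_top. Qed.
Lemma e12_bot j : e12 (bot j) = (layer2, j).
Proof. by rewrite /e12 embE istop_bot proj_bot. Qed.
Lemma e02_top j : e02 (top j) = (layer0, j).
Proof. by rewrite /e02 embE istop_top proj_top. Qed.
Lemma e02_bot j : e02 (bot j) = (layer2, j).
Proof. by rewrite /e02 embE istop_bot proj_bot. Qed.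

Lemma un12_e12 z : un12 (e12 z) = z.
Proof.
case: (tbP z) => k ->; rewrite ?e12_top ?e12_bot /un12 /= ?eqxx //.
by rewrite l21.
Qed.

Lemma connect_X G X x y : sameb X x y -> connect (glue_edge G X) (e12 x) (e12 y).
Proof. by move=> h; apply: connect1; apply: edge12. Qed.

Definition sig (tau : 'I_n -> 'I_n) x := if istop x then top (tau (proj x)) else x.

Lemma pmul_perm G X (tau : 'I_n -> 'I_n) :
  is_spart X ->
  (forall B, B \in G -> exists j, B = [set top j; bot (tau j)]) ->
  (forall j, [set top j; bot (tau j)] \in G) ->
  forall x y, sameb (pmul G X) x y = sameb X (sig tau x) (sig tau y).
Proof.
move=> hX hG1 hG2.
pose r (w : V n) : V n := if w.1 == layer0 then (layer1, tau w.2) else w.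
pose g w := pblock X (un12 (r w)).
have ge12 z : g (e12 z) = pblock X z.
  by case: (tbP z) => k ->; rewrite /g /r ?e12_top ?e12_bot /= ?l10 ?l20 ?un12_e12 -?e12_top -?e12_bot ?un12_e12.
have ge01t j : g (e01 (top j)) = pblock X (top (tau j)).
  by rewrite /g /r e01_top /= eqxx /un12 /= eqxx.
have ge01b j : g (e01 (bot j)) = pblock X (top j).
  by rewrite /g /r e01_bot /= l10 /un12 /= eqxx.
have cr w : connect (glue_edge G X) w (r w).
  rewrite /r; case: ifP => [/eqP h|_]; last exact: connect0.
  apply: connect1; case: w h => l j /= ->.
  by rewrite -e01_top -e01_bot; apply: edge01; apply: (sameb_in (hG2 j)); rewrite !inE eqxx ?orbT.
have rl w : (r w).1 != layer0.
  by rewrite /r; case: ifP => [_|/negbT //]; rewrite /= l10.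
move=> x y; rewrite pmul_sameb (@connect_fiber _ _ _ g (@glue_sym _ _ _)).
- have hz : forall z, g (e02 z) = pblock X (sig tau z).
    move=> z; case: (tbP z) => k ->; rewrite /sig ?istop_top ?istop_bot ?proj_top ?e02_top ?e02_bot /g /r /= ?eqxx ?l20 /un12 /= ?eqxx ?l21 //.
  by rewrite !hz sameb_pblock.
- move=> u v /edgeP [[a [b [-> -> h]]]|[a [b [-> -> h]]]]; last by rewrite !ge12; apply/eqP; rewrite -sameb_pblock.
  have [B hB /andP[]] := sameb_ex h; case: (hG1 _ hB) => j ->.
  have hh z : z \in [set top j; bot (tau j)] -> g (e01 z) = pblock X (top (tau j)).
    by rewrite !inE => /orP[]/eqP->; rewrite ?ge01t ?ge01b.
  by move=> /hh -> /hh ->.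
- move=> u v e.
  apply: (connect_trans (cr u)); rewrite (@sym_connect_sym _ _ (@glue_sym _ _ _)).
  apply: (connect_trans (cr v)); rewrite -(e12K (rl u)) -(e12K (rl v)).
  by apply: connect_X; rewrite sameb_sym sameb_pblock // eq_sym; apply/eqP.
Qed.

End Prod.


Section Merge.
Variable n : nat.
Implicit Types (x y z : 'I_(n + n)) (i j k : 'I_n) (P Q X G : spart n).

Definition mk X i i1 x :=
  if pblock X x == pblock X (top i1) then pblock X (top i) else pblock X x.

Definition mrel X i i1 x y :=
  [|| sameb X x y, sameb X x (top i) && sameb X (top i1) y
    | sameb X x (top i1) && sameb X (top i) y].

Lemma mk_eq X i i1 x y : is_spart X -> (mk X i i1 x == mk X i i1 y) = mrel X i i1 x y.
Proof.
move=> hX; rewrite /mk /mrel !(sameb_pblock _ _ hX).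
case: (pblock X x =P pblock X (top i1)) => [->|nx];
case: (pblock X y =P pblock X (top i1)) => [->|ny] //=.
- by rewrite !eqxx.
- have F : (pblock X (top i1) == pblock X y) = false by apply/eqP => h; apply: ny; rewrite h.
  by rewrite F andbF.
- have F : (pblock X x == pblock X (top i1)) = false by apply/eqP.
  by rewrite eqxx andbT F orbF.
- have F : (pblock X (top i1) == pblock X y) = false by apply/eqP => h; apply: ny; rewrite h.
  by rewrite F andbF !orbF.
Qed.

Lemma mk_top_i1 X i i1 : mk X i i1 (top i1) = pblock X (top i).
Proof. by rewrite /mk eqxx. Qed.
Lemma mk_top_i X i i1 : mk X i i1 (top i) = pblock X (top i).
Proof. by rewrite /mk; case: ifP. Qed.

Lemma mk_connect G X i i1 a b : is_spart X -> sameb G (bot i) (bot i1) ->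
  mk X i i1 a = mk X i i1 b -> connect (glue_edge G X) (e12 a) (e12 b).
Proof.
move=> hX hG /eqP; rewrite mk_eq // /mrel.
have cG : connect (glue_edge G X) (e12 (top i)) (e12 (top i1)).
  by rewrite !e12_top -!e01_bot; apply: connect1; apply: edge01.
have sy := @sym_connect_sym _ _ (@glue_sym _ G X).
case/or3P => [/connect_X //|/andP[h1 h2]|/andP[h1 h2]].
  apply: connect_trans (connect_X _ h1) _; apply: connect_trans cG _; exact: connect_X.
apply: connect_trans (connect_X _ h1) _; rewrite sy in cG; apply: connect_trans cG _; exact: connect_X.
Qed.

Definition rr (w : V n) : V n := if w.1 == layer0 then (layer1, w.2) else w.

Lemma rr_l (w : V n) : (rr w).1 != layer0.
Proof. by rewrite /rr; case: ifP => [_|/negbT //]; rewrite /= l10. Qed.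

Lemma pmul_b G X i i1 :
  is_spart X ->
  (forall B, B \in G -> B = [set top i; bot i; top i1; bot i1] \/ exists j, B = [set top j; bot j]) ->
  (forall j, sameb G (top j) (bot j)) ->
  sameb G (bot i) (bot i1) ->
  forall x y, sameb (pmul G X) x y = (mk X i i1 x == mk X i i1 y).
Proof.
move=> hX hB1 hB2 hB3.
pose g w := mk X i i1 (un12 (rr w)).
have ge12 z : g (e12 z) = mk X i i1 z.
  by case: (tbP z) => k ->; rewrite /g /rr ?e12_top ?e12_bot /= ?l10 ?l20 -?e12_top -?e12_bot ?un12_e12.
have ge01t j : g (e01 (top j)) = mk X i i1 (top j).
  by rewrite /g /rr e01_top /= eqxx /un12 /= eqxx.
have ge01b j : g (e01 (bot j)) = mk X i i1 (top j).
  by rewrite /g /rr e01_bot /= l10 /un12 /= eqxx.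
have cr w : connect (glue_edge G X) w (rr w).
  rewrite /rr; case: ifP => [/eqP h|_]; last exact: connect0.
  apply: connect1; case: w h => l j /= ->.
  by rewrite -e01_top -e01_bot; apply: edge01.
move=> x y; rewrite pmul_sameb (@connect_fiber _ _ _ g (@glue_sym _ _ _)).
- have hz : forall z, g (e02 z) = mk X i i1 z.
    move=> z; case: (tbP z) => k ->; rewrite ?e02_top ?e02_bot /g /rr /= ?eqxx ?l20 /un12 /= ?eqxx ?l21 //.
  by rewrite !hz.
- move=> u v /edgeP [[a [b [-> -> h]]]|[a [b [-> -> h]]]]; last first.
    by rewrite !ge12; apply/eqP; rewrite mk_eq // /mrel h.
  have [B hB /andP[]] := sameb_ex h; case: (hB1 _ hB) => [->|[j ->]].
    have hh z : z \in [set top i; bot i; top i1; bot i1] -> g (e01 z) = pblock X (top i).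
      by rewrite !inE => /orP[/orP[/orP[/eqP->|/eqP->]|/eqP->]|/eqP->]; rewrite ?ge01t ?ge01b ?mk_top_i ?mk_top_i1.
    by move=> /hh -> /hh ->.
  have hh z : z \in [set top j; bot j] -> g (e01 z) = mk X i i1 (top j).
    by rewrite !inE => /orP[]/eqP->; rewrite ?ge01t ?ge01b.
  by move=> /hh -> /hh ->.
- move=> u v e.
  apply: (connect_trans (cr u)); rewrite (@sym_connect_sym _ _ (@glue_sym _ _ _)).
  apply: (connect_trans (cr v)); rewrite -(e12K (rr_l u)) -(e12K (rr_l v)).
  rewrite (@sym_connect_sym _ _ (@glue_sym _ _ _)).
  exact: mk_connect hX hB3 e.
Qed.

Definition gt X i i1 x :=
  if istop x && (proj x \in [:: i; i1]) then None else Some (mk X i i1 x).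

Lemma pmul_t G X i i1 :
  is_spart X ->
  (forall B, B \in G -> [\/ B = [set top i; top i1], B = [set bot i; bot i1] |
                          exists j, [/\ j != i, j != i1 & B = [set top j; bot j]]]) ->
  (forall j, j != i -> j != i1 -> sameb G (top j) (bot j)) ->
  sameb G (bot i) (bot i1) -> sameb G (top i) (top i1) ->
  forall x y, sameb (pmul G X) x y = (gt X i i1 x == gt X i i1 y).
Proof.
move=> hX hT1 hT2 hT3 hT4.
pose g (w : V n) := if (w.1 == layer0) && (w.2 \in [:: i; i1]) then None
                    else Some (mk X i i1 (un12 (rr w))).
have ge12 z : g (e12 z) = Some (mk X i i1 z).
  by case: (tbP z) => k ->; rewrite /g /rr ?e12_top ?e12_bot /= ?l10 ?l20 -?e12_top -?e12_bot ?un12_e12.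
have ge01t j : g (e01 (top j)) = if j \in [:: i; i1] then None else Some (mk X i i1 (top j)).
  by rewrite /g /rr e01_top /= eqxx /un12 /= eqxx.
have ge01b j : g (e01 (bot j)) = Some (mk X i i1 (top j)).
  by rewrite /g /rr e01_bot /= l10 /un12 /= eqxx.
have sy := @sym_connect_sym _ _ (@glue_sym _ G X).
move=> x y; rewrite pmul_sameb (@connect_fiber _ _ _ g (@glue_sym _ _ _)).
- have hz : forall z, g (e02 z) = gt X i i1 z.
    move=> z; case: (tbP z) => k ->; rewrite /gt ?istop_top ?istop_bot ?proj_top ?e02_top ?e02_bot /g /rr /= ?eqxx ?l20 /un12 /= ?eqxx ?l21 //.
  by rewrite !hz.
- move=> u v /edgeP [[a [b [-> -> h]]]|[a [b [-> -> h]]]]; last first.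
    by rewrite !ge12; congr Some; apply/eqP; rewrite mk_eq // /mrel h.
  have [B hB /andP[]] := sameb_ex h; case: (hT1 _ hB) => [->|->|[j [j1 j2 ->]]].
  + have hh z : z \in [set top i; top i1] -> g (e01 z) = None.
      by rewrite !inE => /orP[]/eqP->; rewrite ge01t !inE eqxx ?orbT.
    by move=> /hh -> /hh ->.
  + have hh z : z \in [set bot i; bot i1] -> g (e01 z) = Some (pblock X (top i)).
      by rewrite !inE => /orP[]/eqP->; rewrite ge01b ?mk_top_i ?mk_top_i1.
    by move=> /hh -> /hh ->.
  + have hh z : z \in [set top j; bot j] -> g (e01 z) = Some (mk X i i1 (top j)).
      by rewrite !inE => /orP[]/eqP->; rewrite ?ge01t ?ge01b // !inE (negbTE j1) (negbTE j2).
    by move=> /hh -> /hh ->.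
- have cN w : g w = None -> connect (glue_edge G X) w (e01 (top i)).
    case: w => l j; rewrite /g /=; case: ifP => // /andP[/eqP -> hj] _.
    rewrite -e01_top; move: hj; rewrite !inE => /orP[]/eqP->; first exact: connect0.
    by rewrite sy; apply: connect1; apply: edge01.
  have cS w c : g w = Some c -> connect (glue_edge G X) w (rr w) /\ c = mk X i i1 (un12 (rr w)).
    case: w => l j; rewrite /g /=; case: ifP => // hj [<-]; split => //.
    rewrite /rr /=; case: ifP => [/eqP hl|_]; last exact: connect0.
    move: hj; rewrite hl eqxx /= => /negbT hj.
    apply: connect1; rewrite -e01_top -e01_bot; apply: edge01; apply: hT2.
      by apply: contraNneq hj => ->; rewrite !inE eqxx.
    by apply: contraNneq hj => ->; rewrite !inE eqxx orbT.
  move=> u v; case e : (g u) => [c|].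
    move=> /esym e'; have [c1 h1] := cS _ _ e; have [c2 h2] := cS _ _ e'.
    apply: (connect_trans c1); rewrite sy; apply: (connect_trans c2).
    rewrite -(e12K (rr_l u)) -(e12K (rr_l v)) sy; apply: (mk_connect (i:=i) (i1:=i1)) => //.
    by rewrite -h1 -h2.
  move=> /esym e'; apply: connect_trans (cN _ e) _; rewrite sy; exact: cN.
Qed.

End Merge.


Section Gens.
Variable n : nat.
Implicit Types (x y z : 'I_(n + n)) (i j k : 'I_n) (P Q X G : spart n).

Lemma succI_val i : i.+1 < n -> val (succI i) = i.+1.
Proof. by move=> h; rewrite /succI val_insubd h. Qed.

Lemma succI_neq i : i.+1 < n -> (succI i == i) = false.
Proof. by move=> h; apply/negbTE; rewrite -val_eqE succI_val //=; lia. Qed.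
Lemma succI_neq' i : i.+1 < n -> (i == succI i) = false.
Proof. by move=> h; rewrite eq_sym succI_neq. Qed.

Lemma idp_spart : is_spart (idp n).
Proof.
have -> : idp n = kpart (@proj n).
  rewrite /idp /kpart /equivalence_partition; apply/setP => B; apply/imsetP/imsetP.
    case=> j _ ->; exists (top j) => //; apply/setP => z; rewrite !inE proj_top.
    by case: (tbP z) => k ->; rewrite ?proj_top ?proj_bot ?eq_top ?eq_bot ?top_bot ?bot_top ?orbF // eq_sym.
  case=> x _ ->; exists (proj x) => //; apply/setP => z; rewrite !inE.
  by case: (tbP z) => k ->; rewrite ?proj_top ?proj_bot ?eq_top ?eq_bot ?top_bot ?bot_top ?orbF // eq_sym.
exact: kpart_spart.
Qed.

Lemma idp_sameb x y : sameb (idp n) x y = (proj x == proj y).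
Proof.
apply/idP/idP.
  case/sameb_ex => B /imsetP[j _ ->]; rewrite !inE.
  by case/andP => /orP[]/eqP-> /orP[]/eqP->; rewrite ?proj_top ?proj_bot.
move/eqP => e; apply: (sameb_in (B := [set top (proj x); bot (proj x)])).
  exact: imset_f.
  by case: (tbP x) => k ->; rewrite !inE ?proj_top ?proj_bot eqxx ?orbT.
by rewrite e; case: (tbP y) => k ->; rewrite !inE ?proj_top ?proj_bot eqxx ?orbT.
Qed.

Lemma sig_id x : sig id x = x.
Proof. by rewrite /sig; case: (tbP x) => k ->; rewrite ?proj_top. Qed.

Lemma pmul_idp X x y : is_spart X -> sameb (pmul (idp n) X) x y = sameb X x y.
Proof.
move=> hX; rewrite (@pmul_perm _ _ _ id hX) ?sig_id //.
  by move=> B /imsetP[j _ ->]; exists j.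
by move=> j; apply: imset_f.
Qed.

Definition swI i i1 k : 'I_n := if k == i then i1 else if k == i1 then i else k.

Lemma pmul_s X i x y : i.+1 < n -> is_spart X ->
  sameb (pmul (s_gen i) X) x y = sameb X (sig (swI i (succI i)) x) (sig (swI i (succI i)) y).
Proof.
move=> hi hX; apply: pmul_perm => //.
  move=> B; rewrite /s_gen !inE => /orP[/orP[]/eqP->|/imsetP[j]].
  - by exists i; rewrite /swI eqxx.
  - by exists (succI i); rewrite /swI succI_neq // eqxx.
  - move=> hj ->; move: hj; rewrite ?inE => /andP[h1 h2]; exists j; by rewrite /swI (negbTE h1) (negbTE h2).
move=> j; rewrite /s_gen /swI !inE; case: (j =P i) => [->|/eqP h1]; first by rewrite eqxx.
case: (j =P succI i) => [->|/eqP h2]; first by rewrite eqxx orbT.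
by apply/orP; right; apply: imset_f; rewrite inE h1 h2.
Qed.

Lemma pmul_b_gen X i x y : i.+1 < n -> is_spart X ->
  sameb (pmul (b_gen i) X) x y = (mk X i (succI i) x == mk X i (succI i) y).
Proof.
move=> hi hX; apply: pmul_b => //.
- move=> B; rewrite /b_gen !inE => /orP[/eqP->|/imsetP[j _ ->]]; first by left.
  by right; exists j.
- move=> j; case: (j =P i) => [->|/eqP h1].
    by apply: (sameb_in (B := [set top i; bot i; top (succI i); bot (succI i)])); rewrite !inE ?eqxx ?orbT.
  case: (j =P succI i) => [->|/eqP h2].
    by apply: (sameb_in (B := [set top i; bot i; top (succI i); bot (succI i)])); rewrite !inE ?eqxx ?orbT.
  apply: (sameb_in (B := [set top j; bot j])); rewrite ?inE ?eqxx ?orbT //.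
  by apply/orP; right; apply: imset_f; rewrite inE h1 h2.
- by apply: (sameb_in (B := [set top i; bot i; top (succI i); bot (succI i)])); rewrite !inE ?eqxx ?orbT.
Qed.

Lemma pmul_t_gen X i x y : i.+1 < n -> is_spart X ->
  sameb (pmul (t_gen i) X) x y = (gt X i (succI i) x == gt X i (succI i) y).
Proof.
move=> hi hX; apply: pmul_t => //.
- move=> B; rewrite /t_gen !inE => /orP[/orP[]/eqP->|/imsetP[j]]; [by apply: Or31|by apply: Or32|].
  move=> hj ->; move: hj; rewrite ?inE => /andP[h1 h2]; apply: Or33; by exists j.
- move=> j h1 h2; apply: (sameb_in (B := [set top j; bot j])); rewrite ?inE ?eqxx ?orbT //.
  by apply/orP; right; apply: imset_f; rewrite inE h1 h2.
- by apply: (sameb_in (B := [set bot i; bot (succI i)])); rewrite !inE ?eqxx ?orbT.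
- by apply: (sameb_in (B := [set top i; top (succI i)])); rewrite !inE ?eqxx ?orbT.
Qed.

Lemma evalw_spart (w : seq (gkind * 'I_n)) : is_spart (evalw w).1 /\ is_spart (evalw w).2.
Proof. by case: w => [|g w] /=; [rewrite /= !idp_spart | split; apply: pmul_spart]. Qed.

End Gens.


Section Steps.
Variable n : nat.
Implicit Types (x y z u v : 'I_(n + n)) (i j k : 'I_n) (P Q X G : spart n).

Definition sw u v x := if x == u then v else if x == v then u else x.

Lemma swK u v : involutive (sw u v).
Proof.
move=> x; rewrite /sw; case: (x =P u) => [->|nu].
  by rewrite eqxx; case: eqP.
case: (x =P v) => [->|nv]; first by rewrite eqxx.
by move/eqP/negbTE: nu => ->; move/eqP/negbTE: nv => ->.
Qed.
Lemma sw_inj u v : injective (sw u v).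
Proof. exact: inv_inj (swK u v). Qed.
Lemma sw_l u v : sw u v u = v. Proof. by rewrite /sw eqxx. Qed.
Lemma sw_r u v : sw u v v = u. Proof. by rewrite /sw eqxx; case: eqP. Qed.
Lemma sw_o u v x : x != u -> x != v -> sw u v x = x.
Proof. by rewrite /sw => /negbTE-> /negbTE->. Qed.

Lemma sig_sw i x : i.+1 < n -> sig (swI i (succI i)) x = sw (top i) (top (succI i)) x.
Proof.
move=> hi; rewrite /sig /sw /swI; case: (tbP x) => k ->; rewrite ?istop_top ?istop_bot ?proj_top ?eq_top ?bot_top //=.
by case: ifP => // _; case: ifP.
Qed.

Definition Qp X (p : 'I_(n+n) -> 'I_(n+n)) := forall x y, sameb X x y = (y == x) || (y == p x).

Definition conj (r p : 'I_(n+n) -> 'I_(n+n)) x := r (p (r x)).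

Lemma sstep X p i : i.+1 < n -> is_spart X -> Qp X p ->
  Qp (pmul (s_gen i) X) (conj (sw (top i) (top (succI i))) p).
Proof.
move=> hi hX hQ x y; rewrite pmul_s // !sig_sw // hQ.
have si : injective (sw (top i) (top (succI i))) by apply: sw_inj.
rewrite [X in X || _](inj_eq si); congr (_ || _); rewrite /conj; by apply/eqP/eqP => [<-|->]; rewrite swK.
Qed.

Lemma sameb_Qp X p x y : Qp X p -> sameb X x y = (y == x) || (y == p x).
Proof. by move=> h; rewrite h. Qed.

Definition inT2 i i1 x := (x == top i) || (x == top i1).

Lemma gtE X i i1 x y : is_spart X ->
  (gt X i i1 x == gt X i i1 y) = if inT2 i i1 x then inT2 i i1 y else ~~ inT2 i i1 y && mrel X i i1 x y.
Proof.
move=> hX.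
have e z : istop z && (proj z \in [:: i; i1]) = inT2 i i1 z.
  by rewrite /inT2; case: (tbP z) => k ->; rewrite ?proj_top ?eq_top ?bot_top //= !inE.
rewrite /gt !e; case: (inT2 i i1 x); case: (inT2 i i1 y) => //=.
by rewrite -mk_eq.
Qed.

Definition tp (q : 'I_(n+n) -> 'I_(n+n)) i i1 x :=
  if x == top i then top i1 else if x == top i1 then top i else
  if x == q (top i) then q (top i1) else if x == q (top i1) then q (top i) else q x.

Lemma tstep X q i : i.+1 < n -> is_spart X -> involutive q -> Qp X q ->
  ~~ istop (q (top i)) -> ~~ istop (q (top (succI i))) ->
  Qp (pmul (t_gen i) X) (tp q i (succI i)).
Proof.
move=> hi hX qK hQ hA hB x y.
set i1 := succI i; set A := q (top i); set B := q (top i1).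
have ii1 : (top i == top i1) = false by rewrite eq_top succI_neq'.
have i1i : (top i1 == top i) = false by rewrite eq_sym.
have nA1 : (A == top i) = false by apply/negbTE/eqP => h; move: hA; rewrite -/A h istop_top.
have nA2 : (A == top i1) = false by apply/negbTE/eqP => h; move: hA; rewrite -/A h istop_top.
have nB1 : (B == top i) = false by apply/negbTE/eqP => h; move: hB; rewrite -/i1 -/B h istop_top.
have nB2 : (B == top i1) = false by apply/negbTE/eqP => h; move: hB; rewrite -/i1 -/B h istop_top.
have nAB : (A == B) = false by rewrite /A /B (inj_eq (can_inj qK)) ii1.
have nBA : (B == A) = false by rewrite eq_sym.
have nA1' : (top i == A) = false by rewrite eq_sym.
have nA2' : (top i1 == A) = false by rewrite eq_sym.
have nB1' : (top i == B) = false by rewrite eq_sym.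
have nB2' : (top i1 == B) = false by rewrite eq_sym.
have qA : q A = top i by rewrite /A qK.
have qB : q B = top i1 by rewrite /B qK.
rewrite pmul_t_gen // gtE // /mrel !(sameb_Qp _ _ hQ) /inT2 /tp -/i1 -/A -/B.
case: (x =P top i) => [->|nx1].
  by rewrite eqxx.
case: (x =P top i1) => [->|nx2].
  by rewrite /= orbC.
move/eqP/negbTE: nx1 => nx1; move/eqP/negbTE: nx2 => nx2.
rewrite /=.
case: (x =P A) => [->|nxA].
  rewrite qA eqxx nA2' i1i /= orbF.
  case: (y =P top i) => [->|]; first by rewrite ?eqxx ?nA1' ?nB1' ?ii1 /=.
  case: (y =P top i1) => [->|] /=; first by rewrite ?eqxx ?nA2' ?nB2' ?i1i /=.
  by move=> _ _; rewrite ?orbT ?orbF ?andTb ?andbT ?nA1 ?nB1 /=.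
case: (x =P B) => [->|nxB].
  rewrite qB eqxx nB1' ii1 /=.
  case: (y =P top i) => [->|]; first by rewrite ?eqxx ?nA1' ?nB1' ?ii1 /=.
  case: (y =P top i1) => [->|] /=; first by rewrite ?eqxx ?nA2' ?nB2' ?i1i /=.
  by move=> _ _; rewrite ?orbT ?orbF ?andTb ?andbT ?nA1 ?nB1 /=.
move/eqP/negbTE: nxA => nxA; move/eqP/negbTE: nxB => nxB.
have qx1 : (top i == q x) = false.
  by apply/negbTE; apply/eqP => h; move: nxA; rewrite /A h qK eqxx.
have qx2 : (top i1 == q x) = false.
  by apply/negbTE; apply/eqP => h; move: nxB; rewrite /B h qK eqxx.
have nx1' : (top i == x) = false by rewrite eq_sym; case: (x =P top i) nx1.
have nx2' : (top i1 == x) = false by rewrite eq_sym; case: (x =P top i1) nx2.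
rewrite nx1' nx2' qx1 qx2 /= !orbF.
case: (y =P top i) => [->|]; first by rewrite nx1' qx1.
case: (y =P top i1) => [->|]; first by rewrite nx2' qx2.
by [].
Qed.

End Steps.


Section Comb.
Variable n : nat.
Variable J : spart n.
Hypothesis hJ : boxed J.
Implicit Types (x y z u v : 'I_(n + n)) (i j k : 'I_n) (P Q X G : spart n).
Implicit Types (p q : 'I_(n+n) -> 'I_(n+n)).

Lemma Jspart : is_spart J. Proof. by case: hJ. Qed.

Lemma J1 j : sameb J (top j) (bot j).
Proof.
case: hJ => hs [hp _].
have [_ tI _] := and3P hs.
have cj : top j \in cover J by rewrite (cover_partition hs) inE.
have [S [sS eB]] := hp _ (pblock_mem cj).
have : top j \in pblock J (top j) by rewrite mem_pblock.
rewrite eB => /bigcupP[C CS tC].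
have /imsetP[k _ eC] := subsetP sS _ CS.
move: tC; rewrite eC !inE eq_top top_bot orbF => /eqP ek; subst k.
apply: (sameb_in (pblock_mem cj)); first by rewrite mem_pblock.
by rewrite eB; apply/bigcupP; exists C => //; rewrite eC !inE eqxx orbT.
Qed.

Lemma Jint (a k b : 'I_n) : a <= k -> k <= b -> sameb J (top a) (top b) -> sameb J (top a) (top k).
Proof.
move=> h1 h2 /sameb_ex [B BJ /andP[aB bB]].
case: hJ => _ [_ hi].
by apply: (sameb_in BJ aB); apply: (hi B BJ a k b).
Qed.

Lemma Jsym x y : sameb J x y = sameb J y x. Proof. exact: sameb_sym. Qed.
Lemma Jtrans x y z : sameb J x y -> sameb J y z -> sameb J x z.
Proof. exact: sameb_trans Jspart. Qed.
Lemma Jrefl x : sameb J x x. Proof. exact: sameb_refl Jspart. Qed.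

Definition Inv p := [/\ involutive p, forall x, p x != x & forall x, sameb J x (p x)].

Lemma Inv_conj p r : Inv p -> involutive r -> (forall z, sameb J z (r z)) -> Inv (conj r p).
Proof.
case=> pK pF pJ rK rJ; split.
- by move=> x; rewrite /conj rK pK rK.
- move=> x; rewrite /conj; apply: contra (pF (r x)) => /eqP h.
  by rewrite -{2}h rK.
- move=> x; rewrite /conj; apply: Jtrans (rJ x) _; apply: Jtrans (pJ _) _; exact: rJ.
Qed.

Definition cc p := #|[set x | istop x && istop (p x)]|.

Lemma cc_conj p r : involutive r -> (forall z, istop (r z) = istop z) -> cc (conj r p) = cc p.
Proof.
move=> rK rt; rewrite /cc.
have -> : [set x | istop x && istop (conj r p x)] = r @: [set x | istop x && istop (p x)].
  rewrite (can_imset_pre _ rK); apply/setP => x; rewrite !inE /conj rt.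
  by rewrite -{1}(rK x) rt.
by rewrite card_imset //; apply: can_inj rK.
Qed.

Definition QQ p := exists w : seq (gkind * 'I_n),
  all (fun g : gkind * 'I_n => (g.2.+1 < n) && sameb J (top g.2) (top (succI g.2))) w /\
  Qp (evalw w).1 p.

Lemma Qp_ext X p p' : Qp X p -> p =1 p' -> Qp X p'.
Proof. by move=> h e x y; rewrite h e. Qed.

Lemma QQ_s p i : i.+1 < n -> sameb J (top i) (top (succI i)) ->
  QQ (conj (sw (top i) (top (succI i))) p) -> QQ p.
Proof.
move=> hi hS [w [gw hw]]; exists ((Gz, i) :: w); split; first by rewrite /= hi hS.
have := sstep hi (proj1 (evalw_spart w)) hw.
by move/Qp_ext; apply => x; rewrite /conj !swK.
Qed.

Lemma sw_J i : sameb J (top i) (top (succI i)) -> forall z, sameb J z (sw (top i) (top (succI i)) z).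
Proof.
move=> hS z; rewrite /sw; case: (z =P top i) => [->|_]; first by [].
case: (z =P top (succI i)) => [->|_]; first by rewrite Jsym.
exact: Jrefl.
Qed.

Lemma sw_istop i z : istop (sw (top i) (top (succI i)) z) = istop z.
Proof.
rewrite /sw; case: (z =P top i) => [->|_]; first by rewrite !istop_top.
by case: (z =P top (succI i)) => [->|_]; rewrite ?istop_top.
Qed.

End Comb.


Lemma incr_id (n : nat) (f : 'I_n -> 'I_n) : (forall i : 'I_n, i.+1 < n -> f i < f (succI i)) -> forall j, f j = j.
Proof.
case: n f => [|m] f h; first by case.
have step : forall (d : nat) (j : nat), j + d < m.+1 -> f (inord j) + d <= f (inord (j + d)).
  elim=> [|d IH] j hjk; first by rewrite !addn0.
  have hjk' : j + d < m.+1 by lia.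
  have := IH j hjk'.
  have := h (inord (j + d)); rewrite inordK // => /(_ ltac:(lia)).
  have -> : succI (inord (j + d) : 'I_m.+1) = inord (j + d.+1).
    by apply: ord_inj; rewrite succI_val; rewrite ?inordK; lia.
  lia.
move=> j; apply: ord_inj; have hj := ltn_ord j.
have h1 := step j 0 ltac:(lia).
rewrite add0n inord_val in h1.
have h2 := step (m - j) j ltac:(lia).
rewrite inord_val in h2.
have := ltn_ord (f (inord (j + (m - j)))).
lia.
Qed.

Section PermPhase.
Variable n : nat.
Variable J : spart n.
Hypothesis hJ : boxed J.
Implicit Types (x y z u v : 'I_(n + n)) (i j k : 'I_n) (P Q X G : spart n).
Implicit Types (p q : 'I_(n+n) -> 'I_(n+n)).

Definition pi p j : 'I_n := proj (p (top j)).
Definition Tm p := \sum_(j < n) j * pi p j.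

Lemma cc0 p : cc p = 0 -> forall j, p (top j) = bot (pi p j).
Proof.
move/cards0_eq/setP => h j.
have := h (top j); rewrite !inE istop_top /= => hj.
by rewrite /pi; case: (tbP (p (top j))) hj => k -> //; rewrite proj_bot.
Qed.

Lemma Qp_idp p : Inv J p -> cc p = 0 -> (forall j, pi p j = j) -> Qp (idp n) p.
Proof.
case=> pK _ _ c0 hid.
have pt j : p (top j) = bot j by rewrite (cc0 c0) hid.
have pb j : p (bot j) = top j by rewrite -(pt j) pK.
move=> x y; rewrite idp_sameb; case: (tbP x) => a ->; case: (tbP y) => b ->;
  rewrite ?pt ?pb ?proj_top ?proj_bot ?eq_top ?eq_bot ?top_bot ?bot_top //= ?orbF // eq_sym.
Qed.



Lemma sum_split2 (F : 'I_n -> nat) a b : a != b ->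
  \sum_j F j = F a + F b + \sum_(j | (j != a) && (j != b)) F j.
Proof.
move=> ab; rewrite (bigD1 a) //= (bigD1 b) /=; last by rewrite eq_sym.
by rewrite addnA.
Qed.

Lemma Tm_bound p : Tm p <= n * (n * n).
Proof.
rewrite /Tm; apply: leq_trans (_ : \sum_(j < n) (n * n) <= _).
  by apply: leq_sum => j _; apply: leq_mul; apply: ltnW.
by rewrite sum_nat_const card_ord.
Qed.

Lemma lemA : forall m p, Inv J p -> cc p = 0 -> n * (n * n) - Tm p < m -> QQ J p.
Proof.
elim=> // m IH p ip c0 hm.
case: (boolP [forall j, pi p j == j]) => [/forallP hid|].
  by exists [::]; split => //; apply: Qp_idp => // j; apply/eqP; exact: hid j.
move=> /forallPn [j0 hj0].
have [i [hi hd]] : exists i : 'I_n, i.+1 < n /\ pi p (succI i) < pi p i.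
  case: (boolP [exists i : 'I_n, (i.+1 < n) && (pi p (succI i) < pi p i)]) =>
    [/existsP[i /andP[h1 h2]]|/existsPn hn]; first by exists i.
  exfalso; move/negP: hj0; apply; apply/eqP; apply: incr_id => i hi.
  have := hn i; rewrite hi /= -leqNgt leq_eqVlt => /orP[/eqP e|//].
  have : p (top i) = p (top (succI i)) by rewrite !(cc0 c0) (ord_inj e).
  by move/(can_inj (let: And3 pK _ _ := ip in pK))/top_inj/eqP; rewrite eq_sym succI_neq.
case: (ip) => pK pF pJ.
have Jtop j : sameb J (top j) (top (pi p j)).
  have h0 := pJ (top j); rewrite (cc0 c0) in h0; apply: (Jtrans hJ h0); rewrite Jsym; exact: J1.
have hS : sameb J (top i) (top (succI i)).
  case: (boolP (sameb J (top i) (top (succI i)))) => // /negP nS; exfalso.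
  have a1 : pi p i <= i.
    rewrite leqNgt; apply/negP => lt; apply: nS.
    apply: (Jint hJ (k := succI i) (b := pi p i)); rewrite ?succI_val //; lia.
  have a2 : succI i <= pi p (succI i).
    rewrite leqNgt; apply/negP => lt; apply: nS.
    have h3 : sameb J (top (pi p (succI i))) (top i).
      apply: (Jint hJ (b := succI i)); rewrite ?succI_val //; try lia.
      by rewrite Jsym.
    have h4 := Jtop (succI i); rewrite Jsym in h3; rewrite Jsym in h4; exact: (Jtrans hJ h3 h4).
  move: a2; rewrite succI_val //; lia.
set r := sw (top i) (top (succI i)).
apply: (QQ_s hi hS); apply: IH.
- by apply: Inv_conj => //; [exact: swK | exact: sw_J].
- by rewrite cc_conj //; [exact: swK | exact: sw_istop].
- have piE j : pi (conj r p) j = pi p (swI i (succI i) j).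
    have rt : r (top j) = top (swI i (succI i) j) by rewrite /r -sig_sw // /sig istop_top proj_top.
    have rb k : r (bot k) = bot k by rewrite /r sw_o // bot_top.
    by rewrite /pi /conj rt (cc0 c0) rb proj_bot.
  have ii1 : i != succI i by rewrite succI_neq'.
  have : Tm p < Tm (conj r p).
    rewrite /Tm (sum_split2 _ ii1) [X in _ < X](sum_split2 _ ii1) !piE.
    have -> : \sum_(j | (j != i) && (j != succI i)) j * pi (conj r p) j =
              \sum_(j | (j != i) && (j != succI i)) j * pi p j.
      by apply: eq_bigr => j /andP[h1 h2]; rewrite piE /swI (negbTE h1) (negbTE h2).
    rewrite /swI eqxx succI_neq // eqxx succI_val //.
    have : 0 <= i by [].
    nia.
  rewrite -/r; have := Tm_bound (conj r p); lia.
Qed.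

End PermPhase.


Section CapPhase.
Variable n : nat.
Variable J : spart n.
Hypothesis hJ : boxed J.
Implicit Types (x y z u v : 'I_(n + n)) (i j k : 'I_n) (P Q X G : spart n).
Implicit Types (p q : 'I_(n+n) -> 'I_(n+n)).

Lemma botcap p i : Inv J p -> i.+1 < n -> p (top i) = top (succI i) ->
  exists a b, p (bot a) = bot b /\ sameb J (top i) (bot a).
Proof.
case=> pK pF pJ hi hc.
set Blk := [set k | sameb J (top i) (top k)].
case: (boolP [exists a in Blk, ~~ istop (p (bot a))]).
  case/existsP => a /andP[]; rewrite inE => ha.
  case: (tbP (p (bot a))) => // b e _; exists a, b; split => //.
  exact: (Jtrans hJ ha (J1 hJ a)).
move=> /existsPn hn; exfalso.
have ht a : a \in Blk -> p (bot a) = top (proj (p (bot a))).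
  move=> aB; have := hn a; rewrite aB /= negbK.
  by case: (tbP (p (bot a))) => // k ->; rewrite proj_top.
pose f a := proj (p (bot a)).
have sub : f @: Blk \subset Blk.
  apply/subsetP => _ /imsetP[a aB ->]; move: (aB); rewrite !inE => ha.
  have h1 : sameb J (bot a) (top (f a)) by rewrite /f -ht //; exact: pJ.
  exact: (Jtrans hJ ha (Jtrans hJ (J1 hJ a) h1)).
have inj : {in Blk &, injective f}.
  move=> a a' aB aB' e.
  have : p (bot a) = p (bot a') by rewrite (ht a aB) (ht a' aB') -/(f a) -/(f a') e.
  by move/(can_inj pK)/bot_inj.
have eqB : f @: Blk =i Blk.
  by apply/subset_cardP => //; rewrite card_in_imset.
have iB : i \in Blk by rewrite inE; exact: Jrefl hJ _.
rewrite -eqB in iB; case/imsetP: iB => a aB ei.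
have : p (bot a) = top i by rewrite (ht a aB) -/(f a) -ei.
move/(congr1 p); rewrite pK hc => /eqP; by rewrite bot_top.
Qed.

Lemma QQ_t p i a b : Inv J p -> i.+1 < n -> p (top i) = top (succI i) ->
  p (bot a) = bot b -> sameb J (top i) (bot a) ->
  QQ J (conj (sw (top (succI i)) (bot a)) p) -> QQ J p.
Proof.
move=> ip hi hc hab hJa [w [gw hw]].
case: (ip) => pK pF pJ.
set i1 := succI i; set r := sw (top i1) (bot a); set q := conj r p.
have ii1 : (top i == top i1) = false by rewrite eq_top succI_neq'.
have ab : (bot b == bot a) = false.
  by apply/negbTE; rewrite -hab; apply: pF.
have r_i : r (top i) = top i by rewrite /r sw_o // ?ii1 ?top_bot.
have r_i1 : r (top i1) = bot a by rewrite /r sw_l.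
have r_a : r (bot a) = top i1 by rewrite /r sw_r.
have q_i : q (top i) = bot a by rewrite /q /conj r_i hc r_i1.
have q_i1 : q (top i1) = bot b.
  by rewrite /q /conj r_i1 hab /r sw_o // ?bot_top // ab.
have pi1 : p (top i1) = top i by rewrite -hc pK.
have pb : p (bot b) = bot a by rewrite -hab pK.
exists ((Gd, i) :: w); split.
  by rewrite /= hi gw andbT /= -hc pJ.
have qK : involutive q by move=> x; rewrite /q /conj /r swK pK swK.
have := tstep hi (proj1 (evalw_spart w)) qK hw.
rewrite q_i q_i1 !istop_bot => /(_ isT isT) /Qp_ext; apply => x.
rewrite /tp -/i1 q_i q_i1.
case: (x =P top i) => [->|nx1]; first by rewrite hc.
case: (x =P top i1) => [->|nx2]; first by rewrite pi1.
case: (x =P bot a) => [->|nxa]; first by rewrite hab.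
case: (x =P bot b) => [->|nxb]; first by rewrite pb.
have rx : r x = x by rewrite /r sw_o //; apply/eqP.
rewrite /q /conj rx /r sw_o //; apply/eqP => e.
  by apply: nx1; rewrite -(pK x) e pi1.
by apply: nxb; rewrite -(pK x) e hab.
Qed.

End CapPhase.


Section CapPhase2.
Variable n : nat.
Variable J : spart n.
Hypothesis hJ : boxed J.
Implicit Types (x y z u v : 'I_(n + n)) (i j k : 'I_n) (P Q X G : spart n).
Implicit Types (p q : 'I_(n+n) -> 'I_(n+n)).

Lemma tq_Inv p i a : Inv J p -> i.+1 < n -> p (top i) = top (succI i) ->
  sameb J (top i) (bot a) -> Inv J (conj (sw (top (succI i)) (bot a)) p).
Proof.
move=> ip hi hc hJa; apply: (Inv_conj hJ ip (@swK _ _ _)) => z.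
case: (ip) => pK pF pJ.
have h1 : sameb J (top (succI i)) (bot a).
  have := pJ (top i); rewrite hc Jsym => h; exact: (Jtrans hJ h hJa).
rewrite /sw; case: (z =P top (succI i)) => [->|_] //.
case: (z =P bot a) => [->|_]; first by rewrite Jsym.
exact: Jrefl.
Qed.

Lemma tq_cc p i a b : Inv J p -> i.+1 < n -> p (top i) = top (succI i) ->
  p (bot a) = bot b -> cc (conj (sw (top (succI i)) (bot a)) p) < cc p.
Proof.
move=> ip hi hc hab; case: (ip) => pK pF pJ.
set r := sw (top (succI i)) (bot a).
apply: proper_card; apply/properP; split.
  apply/subsetP => x; rewrite !inE => /andP[tx tq]; rewrite tx /=.
  have rx : r x = x.
    rewrite /r sw_o //; last by apply/eqP => e; move: tx; rewrite e istop_bot.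
    apply/eqP => e; move: tq; rewrite /conj e /r sw_l hab sw_o ?istop_bot //.
      by rewrite bot_top.
    by apply/negP => /eqP/bot_inj e'; move: (pF (bot a)); rewrite hab e' eqxx.
  move: tq; rewrite /conj rx.
  case: (p x =P top (succI i)) => [->|n1]; first by rewrite istop_top.
  case: (p x =P bot a) => [e|n2].
    by move: tx; rewrite -(pK x) e hab istop_bot.
  by rewrite /r sw_o //; apply/eqP.
exists (top i); first by rewrite !inE istop_top hc istop_top.
have ii1 : top i != top (succI i) by rewrite eq_top succI_neq'.
have rt : r (top i) = top i by rewrite /r sw_o // top_bot.
by rewrite !inE istop_top /= /conj rt hc /r sw_l istop_bot.
Qed.

Lemma lemB : forall c p, Inv J p -> cc p <= c -> QQ J p.
Proof.
elim=> [|c IH] p ip hc.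
  apply: (lemA hJ (m := (n * (n * n) - Tm p).+1)) => //; lia.
case: (leqP (cc p) c) => [hc'|hgt]; first exact: IH.
have : 0 < cc p by lia.
rewrite card_gt0 => /set0Pn [x0]; rewrite inE => /andP[tx0 tp0].
case: (ip) => pK pF pJ.
have [a [b [ab hab]]] : exists a b : 'I_n, a < b /\ p (top a) = top b.
  case: (tbP x0) tx0 tp0 => // a0 -> _ tp.
  case: (tbP (p (top a0))) tp => // b0 e1 _.
  have nab : a0 != b0 by apply/eqP => e; move: (pF (top a0)); rewrite e1 e eqxx.
  case: (ltngtP a0 b0) => [lt|gt|eq].
  - by exists a0, b0.
  - by exists b0, a0; split => //; rewrite -e1 pK.
  - by move: nab; rewrite (ord_inj eq) eqxx.
have inner : forall L p, Inv J p -> cc p <= c.+1 ->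
    (exists a b : 'I_n, [/\ a < b, b - a <= L & p (top a) = top b]) -> QQ J p.
  elim=> [|L IHL] q iq hcq [a' [b' [h1 h2 h3]]]; first by lia.
  case: (iq) => qK qF qJ.
  have hb : b'.-1.+1 < n by have := ltn_ord b'; lia.
  pose i : 'I_n := Ordinal (ltnW hb).
  have si : succI i = b' by apply: ord_inj; rewrite succI_val //=; lia.
  case: (eqVneq (b' : nat) a'.+1) => [eb|nb].
    have ea : succI a' = b' by apply: ord_inj; rewrite succI_val; lia.
    have ha : a'.+1 < n by have := ltn_ord b'; lia.
    have hc1 : q (top a') = top (succI a') by rewrite ea.
    have [a2 [b2 [e2 j2]]] := botcap hJ iq ha hc1.
    apply: (QQ_t iq ha hc1 e2 j2); apply: IH.
      exact: (tq_Inv iq ha hc1 j2).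
    have := tq_cc iq ha hc1 e2; lia.
  have hSJ : sameb J (top i) (top (succI i)).
    have h4 := qJ (top a'); rewrite h3 in h4.
    have h5 : sameb J (top a') (top i) by apply: (Jint hJ (b := b')) => //=; lia.
    rewrite si Jsym in h5 *; exact: (Jtrans hJ h5 h4).
  have hi : i.+1 < n := hb; apply: (QQ_s hi hSJ); apply: IHL.
  - by apply: (Inv_conj hJ iq (@swK _ _ _)); exact: sw_J.
  - by rewrite cc_conj //; [exact: swK | exact: sw_istop].
  - exists a', i; split => //=; try lia.
    have n1 : top a' != top i by rewrite eq_top; apply/eqP => /(congr1 val) /=; lia.
    have n2 : top a' != top (succI i) by rewrite eq_top si; apply/eqP => /(congr1 val) /=; lia.
    have ra : sw (top i) (top (succI i)) (top a') = top a' by rewrite sw_o.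
    by rewrite /conj ra h3 -si sw_r.
by apply: (inner (b - a) p ip hc); exists a, b; split.
Qed.

End CapPhase2.


Definition conn (T : seq nat) (a b : nat) : bool :=
  all (fun k => k \in T) (iota (minn a b) (maxn a b - minn a b)).

Lemma connP T a b : reflect (forall k, minn a b <= k < maxn a b -> k \in T) (conn T a b).
Proof.
apply: (iffP allP) => h k hk; apply: h; move: hk; rewrite mem_iota; lia.
Qed.

Lemma conn_nil a b : conn [::] a b = (a == b).
Proof.
apply/connP/eqP => [h|->]; last by lia.
case: (ltngtP a b) => // ab; [have := h a | have := h b]; rewrite in_nil => /(_ ltac:(lia)) //.
Qed.

Lemma conn_sym T a b : conn T a b = conn T b a.
Proof. by rewrite /conn minnC maxnC. Qed.

Lemma conn_eq T T' a b : T =i T' -> conn T a b = conn T' a b.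
Proof. by move=> e; apply/connP/connP => h k hk; [rewrite -e | rewrite e]; apply: h. Qed.

Lemma conn_cons i T a b :
  conn (i :: T) a b = [|| conn T a b, conn T a i && conn T i.+1 b | conn T a i.+1 && conn T i b].
Proof.
have E k : (k \in i :: T) = (k == i) || (k \in T) by rewrite inE.
apply/idP/idP.
  move/connP => H.
  have H' k : minn a b <= k < maxn a b -> k != i -> k \in T.
    by move=> hk nk; have := H k hk; rewrite E (negbTE nk).
  case: (boolP (minn a b <= i < maxn a b)) => hi.
    case: (leqP a b) => ab.
      apply/or3P; apply: Or32; apply/andP; split; apply/connP => k hk; apply: H'; lia.
    apply/or3P; apply: Or33; apply/andP; split; apply/connP => k hk; apply: H'; lia.
  apply/or3P; apply: Or31; apply/connP => k hk; apply: H' => //; apply: contraNneq hi => <-; lia.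
case/or3P => [/connP h|/andP[/connP h1 /connP h2]|/andP[/connP h1 /connP h2]]; apply/connP => k hk; rewrite E.
- by rewrite h ?orbT.
- case: (k =P i) => //= nk.
  case: (boolP (minn a i <= k < maxn a i)) => ki; [apply: h1 | apply: h2]; lia.
- case: (k =P i) => //= nk.
  case: (boolP (minn i b <= k < maxn i b)) => ki; [apply: h2 | apply: h1]; lia.
Qed.

Section Final.
Variable n : nat.
Implicit Types (x y z : 'I_(n + n)) (i j k : 'I_n) (P Q X G : spart n).

Lemma evalw_conn (w : seq (gkind * 'I_n)) : all (fun g : gkind * 'I_n => g.2.+1 < n) w ->
  forall x y, sameb (evalw w).2 x y = conn [seq val g.2 | g <- w] (proj x) (proj y).
Proof.
elim: w => [|g w IH] /=; first by move=> _ x y; rewrite idp_sameb conn_nil.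
case/andP => hg hw x y.
have -> : (gen g).2 = b_gen g.2 by case: g hg => [[] ?].
have hX := proj2 (evalw_spart w).
rewrite pmul_b_gen // mk_eq // /mrel !IH // !proj_top succI_val //.
by rewrite conn_cons.
Qed.

Lemma evalw_e (es : seq 'I_n) (w : seq (gkind * 'I_n)) x y :
  sameb (evalw ([seq (Ge, i) | i <- es] ++ w)).1 x y = sameb (evalw w).1 x y.
Proof.
elim: es x y => [|i es IH] x y //=.
by rewrite pmul_idp ?IH //; exact: (proj1 (evalw_spart _)).
Qed.

End Final.


Section JConn.
Variable n : nat.
Variable J : spart n.
Hypothesis hJ : boxed J.
Implicit Types (x y z : 'I_(n + n)) (i j k : 'I_n).

Definition Sset := [set i : 'I_n | (i.+1 < n) && sameb J (top i) (top (succI i))].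
Definition Sidx := [seq val i | i <- enum Sset].

Lemma memS i : (val i \in Sidx) = (i \in Sset).
Proof. by rewrite mem_map ?mem_enum //; exact: val_inj. Qed.

Lemma memS' i : (nat_of_ord i \in Sidx) = (i \in Sset).
Proof. exact: memS. Qed.

Lemma Jconn_top (a b : 'I_n) : sameb J (top a) (top b) = conn Sidx a b.
Proof.
wlog ab : a b / a <= b.
  move=> W; case: (leqP a b) => h; first exact: W.
  by rewrite Jsym conn_sym W // ltnW.
apply/idP/idP.
- move=> h; apply/connP => k; rewrite (minn_idPl ab) (maxn_idPr ab) => hk.
  have kn : k < n by have := ltn_ord b; lia.
  have kn1 : k.+1 < n by have := ltn_ord b; lia.
  pose kk : 'I_n := Ordinal kn.
  have -> : k = val kk by [].
  rewrite memS inE kn1 /=.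
  have e1 : sameb J (top a) (top kk) by apply: (Jint hJ (b := b)) => //=; lia.
  have e2 : sameb J (top a) (top (succI kk)) by apply: (Jint hJ (b := b)) => //; rewrite succI_val //=; lia.
  rewrite Jsym in e1; exact: (Jtrans hJ e1 e2).
- move/connP; rewrite (minn_idPl ab) (maxn_idPr ab) => H.
  suff gen : forall d (c : 'I_n), a + d = c -> c <= b -> sameb J (top a) (top c).
    by apply: (gen (b - a)) => //; lia.
  elim=> [|d IHd] c e cb.
    by rewrite addn0 in e; rewrite (ord_inj e); exact: Jrefl hJ _.
  have cn : c.-1 < n by have := ltn_ord c; lia.
  pose c' : 'I_n := Ordinal cn.
  have vc : nat_of_ord c' = c.-1 by [].
  have h1 : sameb J (top a) (top c') by apply: IHd; rewrite vc; lia.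
  have : nat_of_ord c' \in Sidx by apply: H; rewrite vc; lia.
  rewrite memS' inE => /andP[_ h2].
  have sc : succI c' = c by apply: ord_inj; rewrite succI_val; rewrite vc; have := ltn_ord c; lia.
  rewrite sc in h2; exact: (Jtrans hJ h1 h2).
Qed.

Lemma Jconn x y : sameb J x y = conn Sidx (proj x) (proj y).
Proof.
have tp z : sameb J z (top (proj z)).
  by case: (tbP z) => k ->; rewrite ?proj_top ?proj_bot; [exact: Jrefl | rewrite Jsym; exact: J1].
rewrite -Jconn_top; apply/idP/idP => h.
- have h1 := tp x; rewrite Jsym in h1; exact: (Jtrans hJ h1 (Jtrans hJ h (tp y))).
- have h2 := tp y; rewrite Jsym in h2; exact: (Jtrans hJ (tp x) (Jtrans hJ h h2)).
Qed.

End JConn.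

Section Partner.
Variable n : nat.
Variable I : spart n.
Hypothesis hI : brauer I.
Implicit Types (x y z : 'I_(n + n)).

Definition partner x := odflt x [pick y in pblock I x | y != x].

Lemma partner_spec x : partner x != x /\ forall y, (y \in pblock I x) = (y == x) || (y == partner x).
Proof.
case: hI => hs h2.
have xc : x \in cover I by rewrite (cover_partition hs) inE.
have B2 := h2 _ (pblock_mem xc).
have xB : x \in pblock I x by rewrite mem_pblock.
have : #|pblock I x :\ x| = 1 by rewrite (cardsD1 x) xB add1n in B2; case: B2.
move=> /eqP/cards1P [y ey].
have yB : y \in pblock I x :\ x by rewrite ey set11.
have py : partner x = y.
  rewrite /partner; case: pickP => [z /andP[zB zx]|none] /=.
    have : z \in pblock I x :\ x by rewrite in_setD1 zx zB.
    by rewrite ey inE => /eqP.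
  by have := none y; move: yB; rewrite in_setD1 => /andP[-> ->].
split; first by move: yB; rewrite in_setD1 py => /andP[].
move=> z; rewrite py; case: (z =P x) => [->|/eqP nz] /=; first by rewrite xB.
by rewrite -(in_set1 z y) -ey in_setD1 nz.
Qed.

Lemma partner_Qp : Qp I partner.
Proof.
case: (hI) => hs _; have [_ tI _] := and3P hs.
move=> x y; rewrite sameb_pblock // eq_pblock ?(cover_partition hs) ?inE //.
exact: (proj2 (partner_spec x)).
Qed.

Lemma partnerK : involutive partner.
Proof.
move=> x; have := partner_Qp (partner x) x.
rewrite sameb_sym partner_Qp eqxx orbT eq_sym.
by case: (partner_spec x) => /negbTE -> _ /= /esym/eqP.
Qed.

End Partner.

Lemma pleq_sameb n (I J : spart n) x y : is_spart I -> is_spart J -> pleq I J -> sameb I x y -> sameb J x y.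
Proof.
move=> hI hJ hIJ /sameb_ex [B BI /andP[xB yB]].
have [_ tI _] := and3P hI.
have xc : x \in cover J by rewrite (cover_partition hJ) inE.
have [S [SI eC]] := hIJ _ (pblock_mem xc).
have : x \in pblock J x by rewrite mem_pblock.
rewrite eC => /bigcupP [B' B'S xB'].
have eB : B' = B by rewrite -(def_pblock tI (subsetP SI _ B'S) xB') (def_pblock tI BI xB).
apply: (sameb_in (pblock_mem xc)); first by rewrite mem_pblock.
by rewrite eC; apply/bigcupP; exists B'; rewrite // eB.
Qed.


Theorem proposition6p10 (n : nat) (I J : spart n) :
  inBR I J ->
  exists w : seq (gkind * 'I_n),
    all (fun g : gkind * 'I_n => (nat_of_ord g.2).+1 < n) w /\ evalw w = (I, J).
Proof.
case=> hI [hJ hIJ].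
have hsI : is_spart I by case: hI.
have hsJ : is_spart J by case: hJ.
set p := partner I.
have QI : Qp I p := partner_Qp hI.
have ip : Inv J p.
  split; first exact: partnerK.
  - by move=> x; case: (partner_spec hI x).
  - move=> x; apply: (pleq_sameb hsI hsJ hIJ); by rewrite QI eqxx orbT.
have [wI [gw hw]] := lemB hJ (c := cc p) ip (leqnn _).
have subw : forall k : nat, k \in [seq nat_of_ord g.2 | g <- wI] -> k \in Sidx J.
  clear hw; elim: wI gw => [|g s IH] //= /andP[/andP[h1 h2] hs] k.
  rewrite inE => /orP[/eqP->|]; last exact: IH.
  by rewrite memS' inE h1 h2.
exists ([seq (Ge, i) | i <- enum (Sset J)] ++ wI); split.
  rewrite all_cat; apply/andP; split.
    by rewrite all_map; apply/allP => i; rewrite mem_enum inE => /andP[].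
  by apply: sub_all gw => g /andP[].
have [s1 s2] := evalw_spart ([seq (Ge, i) | i <- enum (Sset J)] ++ wI).
rewrite [evalw _]surjective_pairing; congr pair.
  by apply: spart_eq => // x y; rewrite evalw_e hw QI.
apply: spart_eq => // x y; rewrite evalw_conn.
  rewrite (Jconn hJ) ; apply: conn_eq => k.
  rewrite map_cat mem_cat -map_comp /= /Sidx.
  rewrite (@eq_map _ _ _ (fun i : 'I_n => nat_of_ord i)) //.
  by apply/orb_idr; exact: subw.
rewrite all_cat; apply/andP; split.
  by rewrite all_map; apply/allP => i; rewrite mem_enum inE => /andP[].
by apply: sub_all gw => g /andP[].
Qed.
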